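(* Let $f:\mathbb{R}^n\to\overline{\mathbb{R}}$ be a proper closed convex function with conjugate $f^*$, and let $K=\{(x,r)\in\mathbb{R}^n\times\mathbb{R} : x=0,\ r\ge 0\}$. The mapping $\Psi:2^{\mathbb{R}^{n+1}}\to 2^{\mathbb{R}^{n+1}}$ defined by $$\Psi(F^* ):=\bigcap_{(u,f^*(u))\in F^*}\{(x,f(x))\in\mathbb{R}^n\times\mathbb{R} : u\in\partial f(x)\}$$ is an inclusion reversing one-to-one mapping between the set of $K$-minimal exposed faces of $\operatorname{epi} f^*$ and the set of $K$-minimal exposed faces of $\operatorname{epi} f$. Its inverse mapping is given by $$\Psi^*(F):=\bigcap_{(x,f(x))\in F}\{(u,f^*(u))\in\mathbb{R}^n\times\mathbb{R} : u\in\partial f(x)\}.$$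
   Context: $\overline{\mathbb{R}}=\mathbb{R}\cup\{\pm\infty\}$; $f^*(u)=\sup_x(\langle x,u\rangle-f(x))$. An exposed face of a convex set $A$ is a set $A\cap H$ with $H$ a supporting hyperplane to $A$ (i.e. $A\cap H\neq\emptyset$ and $A$ lies in one closed half-space bounded by $H$). A point $p\in A$ is minimal with respect to $K$ if $(\{p\}-K\setminus(-K))\cap A=\emptyset$; a face is $K$-minimal if all its points are minimal with respect to $K$. *)

(* Defs.v *)
From HB Require Import structures.
From mathcomp Require Import all_boot all_order all_algebra.
From mathcomp Require Import all_classical all_reals all_analysis.
Set Implicit Arguments. Unset Strict Implicit. Unset Printing Implicit Defensive.
Import Order.TTheory GRing.Theory Num.Theory.
Import numFieldNormedType.Exports.
Local Open Scope classical_set_scope.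
Local Open Scope ring_scope.

Section Defs.
Variables (R : realType) (n : nat).

(* points of R^n are row vectors; points of R^(n+1) = R^n x R are pairs *)
Definition dotv (x u : 'rV[R]_n) : R := \sum_(i < n) x ord0 i * u ord0 i.

Definition epi (f : 'rV[R]_n -> \bar R) : set ('rV[R]_n * R) :=
  [set z | (f z.1 <= z.2%:E)%E].

Definition convex_set2 (A : set ('rV[R]_n * R)) : Prop :=
  forall a b t, A a -> A b -> 0 <= t <= 1 ->
    A (t *: a.1 + (1 - t) *: b.1, t * a.2 + (1 - t) * b.2).

Definition proper_fun (f : 'rV[R]_n -> \bar R) : Prop :=
  (forall x, f x != -oo%E) /\ (exists x, (f x < +oo)%E).

Definition convex_fun (f : 'rV[R]_n -> \bar R) : Prop := convex_set2 (epi f).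
Definition closed_fun (f : 'rV[R]_n -> \bar R) : Prop := closed (epi f).

Definition conj_fun (f : 'rV[R]_n -> \bar R) (u : 'rV[R]_n) : \bar R :=
  ereal_sup [set ((dotv x u)%:E - f x)%E | x in [set: 'rV[R]_n]].

Definition subdiff (f : 'rV[R]_n -> \bar R) (x u : 'rV[R]_n) : Prop :=
  f x \is a fin_num /\ forall y, (f x + (dotv u (y - x))%:E <= f y)%E.

Definition lin2 (a : 'rV[R]_n * R) (z : 'rV[R]_n * R) : R :=
  dotv a.1 z.1 + a.2 * z.2.

Definition supporting_hyperplane (A H : set ('rV[R]_n * R)) : Prop :=
  exists (a : 'rV[R]_n * R) (b : R), a != 0 /\
    H = [set z | lin2 a z = b] /\
    A `&` H !=set0 /\
    ((forall z, A z -> lin2 a z <= b) \/ (forall z, A z -> b <= lin2 a z)).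

Definition exposed_face (A F : set ('rV[R]_n * R)) : Prop :=
  exists H, supporting_hyperplane A H /\ F = A `&` H.

Definition coneK : set ('rV[R]_n * R) := [set z | z.1 = 0 /\ 0 <= z.2].

Definition minimal_wrt (K A : set ('rV[R]_n * R)) (p : 'rV[R]_n * R) : Prop :=
  A p /\
  [set p - k | k in K `\` [set - k | k in K]] `&` A = set0.

Definition K_minimal_face (K A F : set ('rV[R]_n * R)) : Prop :=
  forall p, F p -> minimal_wrt K A p.

Definition K_min_exposed_faces (A : set ('rV[R]_n * R)) : set (set ('rV[R]_n * R)) :=
  [set F | exposed_face A F /\ K_minimal_face coneK A F].

Definition Psi (f : 'rV[R]_n -> \bar R) (Fs : set ('rV[R]_n * R)) : set ('rV[R]_n * R) :=
  [set z | forall w, Fs w -> w.2%:E = conj_fun f w.1 ->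
     z.2%:E = f z.1 /\ subdiff f z.1 w.1].

Definition Psi_star (f : 'rV[R]_n -> \bar R) (F : set ('rV[R]_n * R)) : set ('rV[R]_n * R) :=
  [set w | forall z, F z -> z.2%:E = f z.1 ->
     w.2%:E = conj_fun f w.1 /\ subdiff f z.1 w.1].

End Defs.

(* Main.v *)
Require Import Defs.
From HB Require Import structures.
From mathcomp Require Import all_boot all_order all_algebra.
From mathcomp Require Import all_classical all_reals all_analysis.
From mathcomp Require Import ring lra.
Set Implicit Arguments. Unset Strict Implicit. Unset Printing Implicit Defensive.
Import Order.TTheory GRing.Theory Num.Theory.
Import numFieldNormedType.Exports.
Local Open Scope classical_set_scope.
Local Open Scope ring_scope.

Section S.
Variables (R : realType) (n : nat).
Implicit Types (x u : 'rV[R]_n) (a z : 'rV[R]_n * R).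

Lemma dotvC x u : dotv x u = dotv u x.
Proof. by apply: eq_bigr => i _; rewrite mulrC. Qed.
Lemma dotvDr x u v : dotv x (u + v) = dotv x u + dotv x v.
Proof. by rewrite /dotv -big_split; apply: eq_bigr => i _; rewrite mxE mulrDr. Qed.
Lemma dotvZr x u t : dotv x (t *: u) = t * dotv x u.
Proof. by rewrite /dotv mulr_sumr; apply: eq_bigr => i _; rewrite mxE mulrCA. Qed.
Lemma dotvNr x u : dotv x (- u) = - dotv x u.
Proof. by rewrite /dotv -sumrN; apply: eq_bigr => i _; rewrite mxE mulrN. Qed.
Lemma dotvBr x u v : dotv x (u - v) = dotv x u - dotv x v.
Proof. by rewrite dotvDr dotvNr. Qed.
Lemma dotvDl x u v : dotv (u + v) x = dotv u x + dotv v x.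
Proof. by rewrite dotvC dotvDr !(dotvC x). Qed.
Lemma dotvZl x u t : dotv (t *: u) x = t * dotv u x.
Proof. by rewrite dotvC dotvZr dotvC. Qed.
Lemma dotvNl x u : dotv (- u) x = - dotv u x.
Proof. by rewrite dotvC dotvNr dotvC. Qed.
Lemma dotvBl x u v : dotv (u - v) x = dotv u x - dotv v x.
Proof. by rewrite dotvDl dotvNl. Qed.
Lemma dotv0r x : dotv x 0 = 0.
Proof. by rewrite /dotv big1 // => i _; rewrite mxE mulr0. Qed.
Lemma dotv0l x : dotv 0 x = 0.
Proof. by rewrite dotvC dotv0r. Qed.
Lemma dotv_ge0 x : 0 <= dotv x x.
Proof. by apply: sumr_ge0 => i _; rewrite -expr2 sqr_ge0. Qed.
Lemma dotv_eq0 x : dotv x x = 0 -> x = 0.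
Proof.
move=> /eqP; rewrite psumr_eq0 => [/allP H|i _]; last by rewrite -expr2 sqr_ge0.
apply/rowP => i; rewrite mxE; apply/eqP; rewrite -sqrf_eq0 expr2.
exact: (H i (mem_index_enum _)).
Qed.

Lemma lin2C a z : lin2 a z = lin2 z a.
Proof. by rewrite /lin2 dotvC mulrC. Qed.
Lemma lin2Dr a z w : lin2 a (z + w) = lin2 a z + lin2 a w.
Proof. rewrite /lin2 /= dotvDr; ring. Qed.
Lemma lin2Zr a z t : lin2 a (t *: z) = t * lin2 a z.
Proof. rewrite /lin2 /= dotvZr [t *: z.2]/(GRing.scale _ _) /=; ring. Qed.
Lemma lin2Nr a z : lin2 a (- z) = - lin2 a z.
Proof. rewrite /lin2 /= dotvNr; ring. Qed.
Lemma lin2Br a z w : lin2 a (z - w) = lin2 a z - lin2 a w.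
Proof. by rewrite lin2Dr lin2Nr. Qed.
Lemma lin2Bl a z w : lin2 (z - w) a = lin2 z a - lin2 w a.
Proof. by rewrite lin2C lin2Br !(lin2C a). Qed.
Lemma lin2Zl a z t : lin2 (t *: z) a = t * lin2 z a.
Proof. by rewrite lin2C lin2Zr lin2C. Qed.
Lemma lin2_ge0 a : 0 <= lin2 a a.
Proof. by rewrite /lin2 addr_ge0 ?dotv_ge0 // -expr2 sqr_ge0. Qed.
Lemma lin2_eq0 a : lin2 a a = 0 -> a = 0.
Proof.
case: a => a1 a2 /=; rewrite /lin2 /= => /eqP.
rewrite paddr_eq0 ?dotv_ge0 -?expr2 ?sqr_ge0 // => /andP[/eqP/dotv_eq0 -> ].
by rewrite sqrf_eq0 => /eqP ->.
Qed.
Definition N2 (p : 'rV[R]_n * R) (z : 'rV[R]_n * R) : R :=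
  \sum_(i < n) (p.1 ord0 i - z.1 ord0 i) ^+ 2 + (p.2 - z.2) ^+ 2.

Lemma cont_sq (T : topologicalType) (g : T -> R) : continuous g ->
  continuous (fun y => (g y) ^+ 2).
Proof.
move=> gc x; have -> : (fun y => g y ^+ 2) = (g \* g) by apply/funext=> y; rewrite expr2.
by apply: cvgM; apply: gc.
Qed.

Lemma contD (T : topologicalType) (g h : T -> R) : continuous g -> continuous h ->
  continuous (fun y => g y + h y).
Proof.
move=> gc hc x; have -> : (fun y => g y + h y) = (g + h) by [].
by apply: cvgD; [apply: gc | apply: hc].
Qed.
Lemma contB (T : topologicalType) (g h : T -> R) : continuous g -> continuous h ->
  continuous (fun y => g y - h y).
Proof.
move=> gc hc x; have -> : (fun y => g y - h y) = (g - h) by [].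
by apply: cvgB; [apply: gc | apply: hc].
Qed.

Lemma N2_cont p : continuous (N2 p).
Proof.
rewrite /N2; apply: contD.
  apply: (@continuous_big R _ +%R 0 xpredT add_continuous) => i _.
  apply: cont_sq; apply: contB.
    by move=> y; exact: cvg_cst.
  move=> y; apply: (@continuous_comp _ _ _ fst (fun M : 'rV[R]_n => M ord0 i) y); first exact: cvg_fst.
  exact: coord_continuous.
apply: cont_sq; apply: contB.
  by move=> y; exact: cvg_cst.
move=> y; exact: cvg_snd.
Qed.

Lemma N2E p z : N2 p z = lin2 (p - z) (p - z).
Proof.
rewrite /N2 /lin2 /dotv /= -[(p.2 - z.2) * _]expr2; f_equal.
by apply: eq_bigr => i _; rewrite !mxE expr2.
Qed.

Lemma sq_bound (x N : R) : x ^+ 2 <= N -> `|x| <= N + 1.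
Proof. move=> h; rewrite ler_norml; apply/andP; split; nra. Qed.

Lemma N2_coord (p z : 'rV[R]_n * R) i : `|p.1 ord0 i - z.1 ord0 i| <= N2 p z + 1.
Proof.
apply: sq_bound; rewrite /N2.
rewrite (bigD1 i) //= -addrA lerDl; apply: addr_ge0; last exact: sqr_ge0.
apply: sumr_ge0 => j _; exact: sqr_ge0.
Qed.

Lemma N2_last (p z : 'rV[R]_n * R) : `|p.2 - z.2| <= N2 p z + 1.
Proof.
apply: sq_bound; rewrite /N2 lerDr; apply: sumr_ge0 => j _; exact: sqr_ge0.
Qed.

Lemma separation (C : set ('rV[R]_n * R)) (p : 'rV[R]_n * R) :
  closed C -> convex_set2 C -> C !=set0 -> ~ C p ->
  exists a b, (forall z, C z -> lin2 a z <= b) /\ b < lin2 a p.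
Proof.
move=> Ccl Ccv [z0 Cz0] nCp.
pose rho := N2 p z0 + 1.
pose Box := [set v : 'rV[R]_n | forall i, v ord0 i \in `[p.1 ord0 i - rho, p.1 ord0 i + rho]]
   `*` [set r : R | r \in `[p.2 - rho, p.2 + rho]].
have inBox z : N2 p z <= N2 p z0 -> Box z.
  move=> hz; split => [i|] /=; rewrite in_itv /=.
    have := N2_coord p z i; rewrite ler_norml => /andP[h1 h2].
    apply/andP; split; rewrite /rho; lra.
  have := N2_last p z; rewrite ler_norml => /andP[h1 h2].
  apply/andP; split; rewrite /rho; lra.
have Bc : compact Box.
  apply: compact_setX.
    apply: (@rV_compact _ _ (fun i => [set r : R | r \in `[p.1 ord0 i - rho, p.1 ord0 i + rho]])).
    move=> i; rewrite (_ : [set _ | _] = `[p.1 ord0 i - rho, p.1 ord0 i + rho]%classic).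
      exact: segment_compact.
    by apply/seteqP; split => r.
  rewrite (_ : [set _ | _] = `[p.2 - rho, p.2 + rho]%classic).
    exact: segment_compact.
  by apply/seteqP; split => r.
have Ac : compact (Box `&` C) by apply: compact_closedI.
have A0 : Box `&` C !=set0 by exists z0; split => //; exact: inBox.
have [q qA qmin] := compact_EVT_min A0 Ac (continuous_subspaceT (@N2_cont p)).
move: qA; rewrite inE => -[qB Cq].
have qmin' z : C z -> N2 p q <= N2 p z.
  move=> Cz; case: (leP (N2 p z) (N2 p z0)) => hz.
    by apply: qmin; rewrite inE; split => //; exact: inBox.
  apply: le_trans (ltW hz); apply: qmin; rewrite inE; split => //; exact: inBox.
pose a := p - q.
have var z : C z -> lin2 a (z - q) <= 0.
  move=> Cz; set d := z - q.
  rewrite leNgt; apply/negP => dpos.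
  set D := lin2 d d.
  have D0 : 0 <= D by exact: lin2_ge0.
  pose t := lin2 a d / (lin2 a d + D).
  have sp : 0 < lin2 a d + D by lra.
  have t0 : 0 < t by rewrite divr_gt0.
  have t1 : t <= 1 by rewrite ler_pdivrMr // mul1r lerDl.
  have Cw := Ccv z q t Cz Cq (introT andP (conj (ltW t0) t1)).
  have := qmin' _ Cw.
  have -> : ((t *: z.1 + (1 - t) *: q.1, t * z.2 + (1 - t) * q.2) : 'rV[R]_n * R)
     = q + t *: d.
    rewrite /d; apply/pair_equal_spec; split => /=.
      by rewrite scalerBr scalerBl scale1r addrCA addrA.
    rewrite [t *: _]/(GRing.scale _ _) /=; ring.
  rewrite !N2E (_ : p - (q + t *: d) = a - t *: d); last first.
    by rewrite /a opprD addrA.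
  rewrite -/a (lin2Bl (a - t *: d) a (t *: d)) (lin2Br a a (t *: d)).
  rewrite (lin2Br (t *: d) a (t *: d)) !lin2Zl !lin2Zr (lin2C d a) -/D.
  move=> h.
  have h2 : 2 * lin2 a d <= t * D by nra.
  have ht : t * (lin2 a d + D) = lin2 a d.
    by rewrite /t mulrAC -mulrA divff ?mulr1 // gt_eqF.
  nra.
exists a, (lin2 a q); split.
  move=> z Cz; have := var z Cz; rewrite lin2Br; lra.
have : lin2 a a > 0.
  rewrite lt_def lin2_ge0 andbT; apply/negP => /eqP /lin2_eq0.
  by move/eqP; rewrite subr_eq0 => /eqP pq; apply: nCp; rewrite pq.
rewrite {2}/a lin2Br; lra.
Qed.

Lemma lin2Nl a z : lin2 (- a) z = - lin2 a z.
Proof. by rewrite lin2C lin2Nr lin2C. Qed.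

Definition Sface (g : 'rV[R]_n -> \bar R) (u : 'rV[R]_n) (c : R) : set ('rV[R]_n * R) :=
  [set z | g z.1 = z.2%:E /\ dotv u z.1 - z.2 = c].

Definition minor (g : 'rV[R]_n -> \bar R) (u : 'rV[R]_n) (c : R) : Prop :=
  forall y, ((dotv u y - c)%:E <= g y)%E.

Lemma notK_1 : ~ [set - k | k in (@coneK R n)] ((0, 1) : 'rV[R]_n * R).
Proof.
move=> [k [_ k2]] /pair_equal_spec [_ h].
have : k.2 = -1 by rewrite -h opprK.
by move=> e; move: k2; rewrite e ler0N1.
Qed.

Lemma Kdiff_pos {k} : ((@coneK R n) `\` [set - k | k in (@coneK R n)]) k ->
  k.1 = 0 /\ 0 < k.2.
Proof.
case=> [[k1 k2]] nk; split => //; rewrite lt_def k2 andbT.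
apply/negP => /eqP k20; apply: nk; exists k; first by split.
case: k k1 k2 k20 => a b /= -> _ ->; apply/pair_equal_spec; split; exact: oppr0.
Qed.

Lemma face_of_S (g : 'rV[R]_n -> \bar R) u c :
  minor g u c -> Sface g u c !=set0 -> K_min_exposed_faces (epi g) (Sface g u c).
Proof.
move=> mg S0; split.
  exists [set z | lin2 (u, -1) z = c]; split; last first.
    apply/seteqP; split => z.
      move=> [h1 h2]; split; first by rewrite /epi /= h1.
      by rewrite /lin2 /= mulN1r.
    move=> [h1]; rewrite /lin2 /= mulN1r => h2; split => //.
    apply/le_anti; rewrite h1 /=.
    have := mg z.1; rewrite (_ : dotv u z.1 - c = z.2) //; lra.
  exists (u, -1), c; split.
    apply/negP => /eqP /pair_equal_spec [_] /eqP; by rewrite oppr_eq0 oner_eq0.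
  split => //; split.
    case: S0 => z [h1 h2]; exists z; split; first by rewrite /epi /= h1.
    by rewrite /lin2 /= mulN1r.
  left => z; rewrite /epi /lin2 /= mulN1r => hz.
  have := le_trans (mg z.1) hz; rewrite lee_fin; lra.
move=> p [h1 h2]; split; first by rewrite /epi /= h1.
apply/seteqP; split => // w [[k Kk <-]]; rewrite /epi /=.
have [k1 k2] := Kdiff_pos Kk.
rewrite k1 subr0 h1 lee_fin; lra.
Qed.

Lemma S_of_face (g : 'rV[R]_n -> \bar R) F :
  (forall x, g x != -oo%E) -> K_min_exposed_faces (epi g) F ->
  exists u c, [/\ minor g u c, F = Sface g u c & F !=set0].
Proof.
move=> hg [[H [[a [b [a0 [HE [AH0 side]]]]]] FE] Kmin].
have [a' [b' [FE' side']]] : exists a' b', F = epi g `&` [set z | lin2 a' z = b'] /\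
    (forall z, epi g z -> lin2 a' z <= b').
  case: side => side.
    by exists a, b; split => //; rewrite FE HE.
  exists (- a), (- b); split.
    rewrite FE HE; apply/seteqP; split => z [h1 h2]; split => //=.
      by rewrite /= lin2Nl h2.
    by move: h2; rewrite /= lin2Nl => /oppr_inj.
  by move=> z /side; rewrite lin2Nl lerN2.
have F0 : F !=set0 by rewrite FE.
have [p Fp] := F0.
have [Ap Hp] : epi g p /\ lin2 a' p = b' by rewrite FE' in Fp.
pose p' : 'rV[R]_n * R := (p.1, p.2 + 1).
have Ap' : epi g p'.
  by apply: le_trans Ap _; rewrite lee_fin lerDl.
have lp' : lin2 a' p' = lin2 a' p + a'.2 by rewrite /lin2 /=; ring.
have a2le : a'.2 <= 0.
  by have := side' _ Ap'; rewrite lp' Hp; lra.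
have a2lt : a'.2 < 0.
  rewrite lt_def a2le andbT; apply/negP => /eqP a20.
  have Fp' : F p' by rewrite FE'; split => //; rewrite /= lp' -a20 addr0.
  have [_ M] := Kmin _ Fp'.
  have : ([set p' - k | k in (@coneK R n) `\` [set - k | k in (@coneK R n)]] `&` epi g) p.
    split => //; exists (0, 1).
      split; first by split => //=; exact: ler01.
      exact: notK_1.
    rewrite /p' [RHS]surjective_pairing; apply/pair_equal_spec; split => /=; first exact: subr0.
    by rewrite addrK.
  by rewrite M.
pose c0 := - a'.2.
have c0p : 0 < c0 by rewrite /c0 oppr_gt0.
pose u := c0^-1 *: a'.1.
pose gam := b' / c0.
have key z : dotv u z.1 - z.2 = lin2 a' z / c0.
  rewrite /u dotvZl /lin2 /c0; field; exact: ltr0_neq0.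
have mg : minor g u gam.
  move=> y; case gy: (g y) => [s| |]; last by move: (hg y); rewrite gy.
    have Ay : epi g (y, s) by rewrite /epi /= gy.
    have h := side' _ Ay; have k := key (y, s); rewrite /= in k.
    have : lin2 a' (y, s) / c0 <= b' / c0 by rewrite ler_pM2r // invr_gt0.
    rewrite lee_fin /gam; lra.
  exact: leey.
exists u, gam; split => //.
rewrite FE'; apply/seteqP; split => z.
  move=> [Az Hz]; have kz := key z; rewrite Hz -/gam in kz; split => //.
  apply/le_anti; rewrite Az /=.
  by have := mg z.1; rewrite -kz opprB addrCA subrr addr0.
move=> [gz kz]; split; first by rewrite /epi /= gz.
have := key z; rewrite kz /gam => /(congr1 (fun t => t * c0)).
by rewrite /= !divfK ?gt_eqF.
Qed.
Lemma dotv_sumr x (I : finType) (F : I -> 'rV[R]_n) :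
  dotv x (\sum_i F i) = \sum_i dotv x (F i).
Proof. by apply: (big_morph _ (dotvDr x) (dotv0r x)). Qed.

Fixpoint avg (x : 'rV[R]_n) (l : seq 'rV[R]_n) : 'rV[R]_n :=
  if l is y :: l' then 2^-1 *: y + 2^-1 *: avg x l' else x.

Lemma ri_point (D : set 'rV[R]_n) :
  (forall a b : 'rV[R]_n, D a -> D b -> D (2^-1 *: a + 2^-1 *: b)) -> D !=set0 ->
  exists u, D u /\ forall d m, (forall v, D v -> m <= dotv d v) ->
    dotv d u = m -> forall v, D v -> dotv d v = m.
Proof.
move=> Dmid [v0 Dv0].
pose P k := exists s : seq 'rV[R]_n, (forall x, x \in s -> D x) /\
   \dim <<[seq x - v0 | x <- s]>> = k.
have ex0 : exists k, `[< P k >] by exists 0%N; apply/asboolP; exists [::]; split => //; rewrite span_nil dimv0.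
have ub : forall k, `[< P k >] -> (k <= 1 * n)%N.
  move=> k /asboolP [s [_ <-]]; apply: leq_trans (dimvS (subvf _)) _; rewrite dimvf.  by rewrite /dim /=.
case: (ex_maxnP ex0 ub) => k /asboolP [s [sD sk]] kmax.
have inspan v : D v -> v - v0 \in <<[seq x - v0 | x <- s]>>%VS.
  move=> Dv.
  have sub : (<<[seq x - v0 | x <- s]>> <= <<[seq x - v0 | x <- v :: s]>>)%VS.
    by rewrite /= span_cons addvSr.
  have : (<<[seq x - v0 | x <- s]>> == <<[seq x - v0 | x <- v :: s]>>)%VS.
    rewrite eqEdim sub /= sk; apply: kmax; apply/asboolP; exists (v :: s); split => //.
    by move=> x; rewrite inE => /orP [/eqP -> //| /sD].
  move/eqP => ->; apply: memv_span; exact: mem_head.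
have avgD l : (forall x, x \in l -> D x) -> D (avg v0 l).
  elim: l => [//|y l IH] /= Hl; apply: Dmid; first by apply: Hl; exact: mem_head.
  by apply: IH => x xl; apply: Hl; rewrite inE xl orbT.
exists (avg v0 s); split; first exact: avgD.
move=> d m hm.
have avgm l : (forall x, x \in l -> D x) -> dotv d (avg v0 l) = m ->
    dotv d v0 = m /\ forall x, x \in l -> dotv d x = m.
  elim: l => [//|y l IH] /= Hl.
  have Dy : D y by apply: Hl; exact: mem_head.
  have Hl' : forall x, x \in l -> D x by move=> x xl; apply: Hl; rewrite inE xl orbT.
  rewrite dotvDr !dotvZr => h.
  have h1 := hm _ Dy; have h2 := hm _ (avgD _ Hl').
  have ey : dotv d y = m by lra.
  have [e0 el] := IH Hl' ltac:(lra).
  split => // x; rewrite inE => /orP [/eqP -> //| /el //].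
move=> /(avgm _ sD) [e0 es] v Dv.
have := @coord_span _ _ _ (in_tuple [seq x - v0 | x <- s]) (v - v0) (inspan v Dv).
move=> /(congr1 (dotv d)); rewrite dotv_sumr big1 ?dotvBr ?e0.
  by move/eqP; rewrite subr_eq0 => /eqP.
move=> i _; rewrite dotvZr.
have : (in_tuple [seq x - v0 | x <- s])`_i \in [seq x - v0 | x <- s].
  by apply: mem_nth; exact: ltn_ord.
move=> /mapP [x xs ->]; rewrite dotvBr es // e0 subrr mulr0 //.
Qed.

Local Open Scope ereal_scope.

Lemma conj_ub (f : 'rV[R]_n -> \bar R) x v : (dotv x v)%:E - f x <= conj_fun f v.
Proof. by apply: ereal_sup_ubound; exists x. Qed.

Lemma conj_le (f : 'rV[R]_n -> \bar R) v c :
  (forall x, (dotv x v)%:E - f x <= c) -> conj_fun f v <= c.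
Proof. by move=> h; apply: ge_ereal_sup => _ [x _ <-]; exact: h. Qed.

Lemma subdiffP (f : 'rV[R]_n -> \bar R) x v :
  subdiff f x v <-> exists r, f x = r%:E /\ conj_fun f v = (dotv x v - r)%:E.
Proof.
split.
  move=> [fx h]; exists (fine (f x)); split; first by rewrite fineK.
  apply/le_anti; apply/andP; split; last first.
    by have := conj_ub f x v; rewrite -{1}(fineK fx).
  apply: conj_le => y; have := h y; rewrite -(fineK fx).
  case: (f y) => [s| |] //=; last by move=> _; rewrite addeNy leNye.
  rewrite -?EFinN -!EFinD !lee_fin dotvBr (dotvC x v) (dotvC y v); lra.
move=> [r [fx hc]]; split; first by rewrite fx.
move=> y; have := conj_ub f y v; rewrite hc fx.
case: (f y) => [s| |] //=; last by move=> _; rewrite leey.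
rewrite -?EFinN -!EFinD !lee_fin dotvBr (dotvC x v) (dotvC y v); lra.
Qed.

End S.

Section Main.
Variables (R : realType) (n : nat) (f : 'rV[R]_n -> \bar R).
Hypotheses (pf : proper_fun f) (cf : closed_fun f) (cvf : convex_fun f).

Local Notation fs := (conj_fun f).

Lemma f_nmo x : f x != -oo%E.
Proof. by case: pf. Qed.

Lemma f_fin_ex : exists x r, f x = r%:E.
Proof.
case: pf => h [x hx]; exists x, (fine (f x)); rewrite fineK //.
by rewrite fin_numE h lt_eqF.
Qed.

Lemma conj_nmo v : fs v != -oo%E.
Proof.
have [x [r fx]] := f_fin_ex.
have := conj_ub f x v; rewrite fx -EFinB.
by case: (fs v).
Qed.

Lemma Sface_f_eq u c : minor f u c -> Sface f u c !=set0 ->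
  Sface f u c = [set z | z.2%:E = f z.1 /\ subdiff f z.1 u].
Proof.
move=> mg [[x1 r1] [/= fx1 e1]].
apply/seteqP; split => z.
  move=> [fz ez]; split => //; apply/subdiffP; exists z.2; split => //.
  apply/le_anti; apply/andP; split; last first.
    by have := conj_ub f z.1 u; rewrite fz -EFinB.
  apply: conj_le => y; have := mg y.
  case: (f y) => [s| |] //=; last by move=> _; rewrite addeNy leNye.
  rewrite -EFinB !lee_fin (dotvC y u) (dotvC z.1 u); lra.
move=> [fz /subdiffP [s [fz' hs]]].
have ss : s = z.2 by move: fz'; rewrite -fz => -[].
split => //=.
have := conj_ub f x1 u; rewrite hs fx1 -EFinB lee_fin.
have := mg z.1; rewrite -fz lee_fin (dotvC x1 u) (dotvC z.1 u) ss; lra.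
Qed.

Lemma FF_of u x1 : subdiff f x1 u ->
  K_min_exposed_faces (epi f) [set z | z.2%:E = f z.1 /\ subdiff f z.1 u].
Proof.
move=> sx1; have sx1' := sx1; move/subdiffP: sx1' => [r1 [fx1 hc]].
have mg : minor f u (dotv u x1 - r1).
  move=> y; case: sx1 => _ /(_ y); rewrite fx1 dotvBr -EFinD.
  congr (_ <= _)%E; congr (_%:E); ring.
have S0 : Sface f u (dotv u x1 - r1) !=set0 by exists (x1, r1).
rewrite -(Sface_f_eq mg S0); exact: face_of_S.
Qed.

Lemma char_FF F : K_min_exposed_faces (epi f) F ->
  exists u, F = [set z | z.2%:E = f z.1 /\ subdiff f z.1 u] /\ F !=set0.
Proof.
move=> /(S_of_face f_nmo) [u [c [mg -> S0]]].
by exists u; split => //; rewrite Sface_f_eq.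
Qed.

Lemma Sface_conj_eq x0 c : f x0 = c%:E ->
  Sface fs x0 c = [set w | w.2%:E = fs w.1 /\ subdiff f x0 w.1].
Proof.
move=> fx0; apply/seteqP; split => w.
  move=> [hw ew]; split => //; apply/subdiffP; exists c; split => //.
  by rewrite hw -ew; congr (_%:E); ring.
move=> [hw /subdiffP [s [fx0' hs]]].
have sc : s = c by move: fx0'; rewrite fx0 => -[].
split => //=; move: hs; rewrite -hw sc => -[->]; ring.
Qed.

Lemma FS_of x0 v0 : subdiff f x0 v0 ->
  K_min_exposed_faces (epi fs) [set w | w.2%:E = fs w.1 /\ subdiff f x0 w.1].
Proof.
move=> s0; have := s0; move/subdiffP => [c [fx0 hc]].
rewrite -(Sface_conj_eq fx0); apply: face_of_S.
  move=> v; have := conj_ub f x0 v; rewrite fx0 -EFinB.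
  by [].
exists (v0, dotv x0 v0 - c); split => /=; first exact: hc.
ring.
Qed.


Lemma KEY x0 c : minor fs x0 c -> Sface fs x0 c !=set0 -> f x0 = c%:E.
Proof.
move=> mg [[u r] [/= hu eu]].
have ge : (c%:E <= f x0)%E.
  case fx: (f x0) => [s| |]; last by move: (f_nmo x0); rewrite fx.
    have := conj_ub f x0 u; rewrite fx hu -EFinB !lee_fin; lra.
  exact: leey.
apply/le_anti; rewrite ge andbT; case: leP => // lt.
have nep : ~ epi f (x0, c) by rewrite /epi /= => h; move: lt; rewrite ltNge h.
have [xe [re fe]] := f_fin_ex.
have ne : epi f !=set0 by exists (xe, re); rewrite /epi /= fe.
have [a [b [hs hp]]] := separation cf cvf ne nep.
have liD z t : lin2 a (z.1, z.2 + t) = lin2 a z + a.2 * t.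
  by rewrite /lin2 /=; ring.
have a2le : a.2 <= 0.
  rewrite leNgt; apply/negP => a2p.
  pose t := (`|b - lin2 a (xe, re)| + 1) / a.2.
  have tp : 0 <= t by rewrite /t divr_ge0 // ?ltW.
  have E : epi f ((xe, re).1, (xe, re).2 + t).
    by rewrite /epi /= fe lee_fin lerDl.
  have := hs _ E; rewrite liD /t mulrCA divff ?gt_eqF // mulr1.
  have := ler_norm (b - lin2 a (xe, re)); lra.
have [a2lt|a20] := ltP a.2 0; last first.
  have a2z : a.2 = 0 by apply/le_anti; rewrite a2le a20.
  have cb : (fs (u + a.1) <= (r + b)%:E)%E.
    apply: conj_le => x.
    case fx: (f x) => [s| |]; last by move: (f_nmo x); rewrite fx.
      have h1 := conj_ub f x u; rewrite fx hu -EFinB lee_fin in h1.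
      have h2 : epi f (x, s) by rewrite /epi /= fx.
      have := hs _ h2; rewrite /lin2 /= a2z mul0r addr0 => h3.
      rewrite -EFinB lee_fin dotvDr (dotvC x a.1); lra.
    by rewrite addeNy leNye.
  have := le_trans (mg (u + a.1)) cb; rewrite lee_fin dotvDr.
  move: hp; rewrite /lin2 /= a2z mul0r addr0 (dotvC a.1 x0); lra.
pose c0 := - a.2.
have c0p : 0 < c0 by rewrite /c0 oppr_gt0.
pose v := c0^-1 *: a.1.
have key z : dotv z.1 v - z.2 = lin2 a z / c0.
  rewrite /v dotvZr /lin2 /c0 (dotvC z.1); field; exact: ltr0_neq0.
have cb : (fs v <= (b / c0)%:E)%E.
  apply: conj_le => x.
  case fx: (f x) => [s| |]; last by move: (f_nmo x); rewrite fx.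
    have h2 : epi f (x, s) by rewrite /epi /= fx.
    have := hs _ h2 => h3.
    have := key (x, s); rewrite /= => k.
    have : lin2 a (x, s) / c0 <= b / c0 by rewrite ler_pM2r // invr_gt0.
    rewrite -EFinB lee_fin; lra.
  by rewrite addeNy leNye.
have := le_trans (mg v) cb; rewrite lee_fin.
have := key (x0, c); rewrite /= (dotvC x0 v) => ->.
rewrite ler_pM2r ?invr_gt0 //; lra.
Qed.

Lemma char_FS Fs : K_min_exposed_faces (epi fs) Fs ->
  exists x0, Fs = [set w | w.2%:E = fs w.1 /\ subdiff f x0 w.1] /\ Fs !=set0.
Proof.
move=> /(S_of_face conj_nmo) [x0 [c [mg -> S0]]].
have fx0 := KEY mg S0.
by exists x0; split => //; rewrite (Sface_conj_eq fx0).
Qed.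


Lemma D_mid x0 (a b : 'rV[R]_n) : subdiff f x0 a -> subdiff f x0 b ->
  subdiff f x0 (2^-1 *: a + 2^-1 *: b).
Proof.
move=> [fx ha] [_ hb]; split => // y.
have := ha y; have := hb y; rewrite -(fineK fx).
case: (f y) => [s| |] //=; last by move=> _ _; rewrite leey.
rewrite -!EFinD !lee_fin dotvDl !dotvZl; lra.
Qed.

Lemma E_mid u (a b : 'rV[R]_n) : subdiff f a u -> subdiff f b u ->
  subdiff f (2^-1 *: a + 2^-1 *: b) u.
Proof.
move=> /subdiffP [sa [fa ha]] /subdiffP [sb [fb hb]].
set m := 2^-1 *: a + 2^-1 *: b.
have k : sb = dotv b u - dotv a u + sa by move: ha; rewrite hb => -[]; lra.
have h12 : (0 <= (2^-1 : R) <= 1) by apply/andP; split; rewrite ?invr_ge0 ?invf_le1 //; lra.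
have Ha : epi f (a, sa) by rewrite /epi /= fa.
have Hb : epi f (b, sb) by rewrite /epi /= fb.
have := cvf Ha Hb h12; rewrite /epi /= (_ : 1 - 2^-1 = 2^-1 :> R); last by field.
rewrite -/m => fm.
have lo := conj_ub f m u; rewrite ha in lo.
have fmr : f m = (dotv m u - (dotv a u - sa))%:E.
  apply/le_anti; apply/andP; split.
    apply: le_trans fm _; rewrite lee_fin /m dotvDl !dotvZl; lra.
  case fmE: (f m) => [s| |]; last by move: (f_nmo m); rewrite fmE.
    by move: lo; rewrite fmE -EFinB !lee_fin => h; lra.
  exact: leey.
apply/subdiffP; exists (dotv m u - (dotv a u - sa)); split => //.
by rewrite ha; congr (_%:E); ring.
Qed.

Lemma riD x0 v0 : subdiff f x0 v0 -> exists u, subdiff f x0 u /\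
  forall x, subdiff f x u -> forall v, subdiff f x0 v -> subdiff f x v.
Proof.
move=> s0.
have [u [Du ri]] := ri_point (@D_mid x0) (ex_intro _ v0 s0).
exists u; split => // x /subdiffP [s [fx hu]] v Dv.
have := Du; move/subdiffP => [c [fx0 hu0]].
have key w : subdiff f x0 w -> fs w = (dotv x0 w - c)%:E.
  by move=> /subdiffP [c' [fx0' hw]]; move: fx0'; rewrite fx0 => -[ec]; rewrite hw ec.
have hm : forall w, subdiff f x0 w -> c - s <= dotv (x0 - x) w.
  move=> w Dw; have := conj_ub f x w; rewrite key // fx -EFinB lee_fin dotvBl; lra.
have e := ri (x0 - x) (c - s) hm.
have eu : dotv (x0 - x) u = c - s.
  by move: hu; rewrite hu0 => -[]; rewrite dotvBl; lra.
have := e eu v Dv; rewrite dotvBl => ev.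
apply/subdiffP; exists s; split => //; rewrite key //; congr (_%:E); lra.
Qed.

Lemma riE u x1 : subdiff f x1 u -> exists x0, subdiff f x0 u /\
  forall v, subdiff f x0 v -> forall x, subdiff f x u -> subdiff f x v.
Proof.
move=> s1.
have [x0 [Ex0 ri]] := ri_point (@E_mid u) (ex_intro _ x1 s1).
exists x0; split => // v /subdiffP [s0 [fx0 hv]].
have := Ex0; move/subdiffP => [s0' [fx0' hu0]].
have ss : s0' = s0 by move: fx0'; rewrite fx0 => -[].
rewrite ss in hu0.
have fE x : subdiff f x u -> exists s, f x = s%:E /\ dotv x u - s = dotv x0 u - s0.
  move=> /subdiffP [s [fx hu]]; exists s; split => //.
  by move: hu; rewrite hu0 => -[].
have hm : forall x, subdiff f x u -> dotv (u - v) x0 <= dotv (u - v) x.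
  move=> x /fE [s [fx e]]; have := conj_ub f x v; rewrite hv fx -EFinB lee_fin.
  rewrite !dotvBl (dotvC u x) (dotvC v x) (dotvC u x0) (dotvC v x0); lra.
have e := ri (u - v) _ hm erefl.
move=> x Ex; have [s [fx ex]] := fE x Ex.
have := e x Ex; rewrite !dotvBl (dotvC u x) (dotvC v x) (dotvC u x0) (dotvC v x0) => ev.
apply/subdiffP; exists s; split => //; rewrite hv; congr (_%:E); lra.
Qed.

Lemma Psi_char (D : set 'rV[R]_n) Fs :
  (forall v, D v -> fs v \is a fin_num) ->
  Fs = [set w | w.2%:E = fs w.1 /\ D w.1] -> Fs !=set0 ->
  Psi f Fs = [set z | z.2%:E = f z.1 /\ forall v, D v -> subdiff f z.1 v].
Proof.
move=> Dfin -> [w0 [h0 D0]]; apply/seteqP; split => z.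
  move=> hz; split; first by case: (hz w0).
  move=> v Dv.
  have fv := Dfin v Dv.
  have := hz (v, fine (fs v)); rewrite /= fineK //.
  by move=> /(_ (conj erefl Dv) erefl) [].
move=> [hz hD] w [hw Dw] _; split => //; exact: hD.
Qed.

Lemma Psi_star_char (E : set 'rV[R]_n) F :
  (forall x, E x -> f x \is a fin_num) ->
  F = [set z | z.2%:E = f z.1 /\ E z.1] -> F !=set0 ->
  Psi_star f F = [set w | w.2%:E = fs w.1 /\ forall x, E x -> subdiff f x w.1].
Proof.
move=> Efin -> [z0 [h0 E0]]; apply/seteqP; split => w.
  move=> hw; split; first by case: (hw z0).
  move=> x Ex.
  have fx := Efin x Ex.
  have := hw (x, fine (f x)); rewrite /= fineK //.
  by move=> /(_ (conj erefl Ex) erefl) [].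
move=> [hw hE] z [hz Ez] _; split => //; exact: hE.
Qed.


Lemma subdiff_fin x v : subdiff f x v -> f x \is a fin_num /\ fs v \is a fin_num.
Proof. by move=> /subdiffP [r [-> ->]]. Qed.

Lemma part1 Fs : K_min_exposed_faces (epi fs) Fs -> K_min_exposed_faces (epi f) (Psi f Fs).
Proof.
move=> /char_FS [x0 [eFs ne]].
have [w0 [_ D0]] : exists w0, w0.2%:E = fs w0.1 /\ subdiff f x0 w0.1 by case: ne => w; rewrite eFs => hw; exists w.
have [u [Du ri]] := riD D0.
rewrite (Psi_char (fun v Dv => (subdiff_fin Dv).2) eFs ne).
rewrite (_ : [set z | _] = [set z | z.2%:E = f z.1 /\ subdiff f z.1 u]).
  exact: FF_of Du.
apply/seteqP; split => z [h1 h2]; split => //; first exact: h2.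
by move=> v Dv; apply: ri h2 _ Dv.
Qed.

Lemma part2 F : K_min_exposed_faces (epi f) F -> K_min_exposed_faces (epi fs) (Psi_star f F).
Proof.
move=> /char_FF [u [eF ne]].
have [z0 [_ E0]] : exists z0, z0.2%:E = f z0.1 /\ subdiff f z0.1 u by case: ne => w; rewrite eF => hw; exists w.
have [x0 [Ex0 ri]] := riE E0.
rewrite (Psi_star_char (fun x Ex => (subdiff_fin Ex).1) eF ne).
rewrite (_ : [set w | _] = [set w | w.2%:E = fs w.1 /\ subdiff f x0 w.1]).
  exact: FS_of Ex0.
apply/seteqP; split => w [h1 h2]; split => //; first exact: h2.
by move=> x Ex; apply: ri h2 _ Ex.
Qed.

Lemma part3 Fs : K_min_exposed_faces (epi fs) Fs -> Psi_star f (Psi f Fs) = Fs.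
Proof.
move=> /char_FS [x0 [eFs ne]].
have [w0 [_ D0]] : exists w0, w0.2%:E = fs w0.1 /\ subdiff f x0 w0.1 by case: ne => w; rewrite eFs => hw; exists w.
rewrite (Psi_char (fun v Dv => (subdiff_fin Dv).2) eFs ne).
have fx0 := (subdiff_fin D0).1.
rewrite (@Psi_star_char [set x | forall v, subdiff f x0 v -> subdiff f x v]) //.
- rewrite eFs; apply/seteqP; split => w [h1 h2]; split => //.
    exact: h2.
  by move=> x Ex; apply: Ex.
- by move=> x /= Ex; exact: (subdiff_fin (Ex _ D0)).1.
- by exists (x0, fine (f x0)); split => //=; rewrite fineK.
Qed.

Lemma part4 F : K_min_exposed_faces (epi f) F -> Psi f (Psi_star f F) = F.
Proof.
move=> /char_FF [u [eF ne]].
have [z0 [_ E0]] : exists z0, z0.2%:E = f z0.1 /\ subdiff f z0.1 u by case: ne => w; rewrite eF => hw; exists w.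
rewrite (Psi_star_char (fun x Ex => (subdiff_fin Ex).1) eF ne).
have fu := (subdiff_fin E0).2.
rewrite (@Psi_char [set v | forall x, subdiff f x u -> subdiff f x v]) //.
- rewrite eF; apply/seteqP; split => z [h1 h2]; split => //.
    exact: h2.
  by move=> v Dv; apply: Dv.
- by move=> v /= Dv; exact: (subdiff_fin (Dv _ E0)).2.
- by exists (u, fine (fs u)); split => //=; rewrite fineK.
Qed.

End Main.

Unset Implicit Arguments.
Theorem theorem3p3 (R : realType) (n : nat) (f : 'rV[R]_n -> \bar R) :
  proper_fun f -> closed_fun f -> convex_fun f ->
  let FS := K_min_exposed_faces (epi (conj_fun f)) in
  let FF := K_min_exposed_faces (epi f) in
  (forall Fs, FS Fs -> FF (Psi f Fs)) /\
  (forall F, FF F -> FS (Psi_star f F)) /\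
  (forall Fs, FS Fs -> Psi_star f (Psi f Fs) = Fs) /\
  (forall F, FF F -> Psi f (Psi_star f F) = F) /\
  (forall Fs1 Fs2, FS Fs1 -> FS Fs2 ->
     (Fs1 `<=` Fs2 <-> Psi f Fs2 `<=` Psi f Fs1)).
Proof.
move=> pf cf cvf FS FF.
split; first exact: part1.
split; first exact: part2.
split; first exact: part3.
split; first exact: part4.
move=> Fs1 Fs2 h1 h2; split.
  by move=> sub z hz w Fw; apply: hz; apply: sub.
move=> sub; rewrite -(part3 pf cf cvf h1) -(part3 pf cf cvf h2).
by move=> w hw z Pz; apply: hw; apply: sub.
Qed.
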